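(* Assume the no-anticipation, common-support and transition-independence conditions stated in the context. Then for every $t=T_0+1,\dots,T$, \[ \boldsymbol\mu^{\mathrm{DiD}}_t-\boldsymbol\mu^{\mathrm{ATT}}_t=\sum_{\mathbf x_1^{T_0}\in\mathcal X^{T_0}}\mathbb{E}\big[\mathbf X_t-\mathbf x_{T_0}\mid \mathbf X_1^{T_0}=\mathbf x_1^{T_0},D=0\big]\Big\{\Pr(\mathbf X_1^{T_0}=\mathbf x_1^{T_0}\mid D=1)-\Pr(\mathbf X_1^{T_0}=\mathbf x_1^{T_0}\mid D=0)\Big\}, \] where $\mathbf x_{T_0}$ denotes the last component of $\mathbf x_1^{T_0}=(\mathbf x_1,\dots,\mathbf x_{T_0})$.
   Context: Fix integers $T_0\ge1$, $T_1\ge1$, $T=T_0+T_1$, $K\ge2$, and outcome categories $\mathcal Y=\{\bar y^{(1)},\dots,\bar y^{(K)}\}$. On a probability space, a unit has a treatment indicator $D\in\{0,1\}$ (treated units are untreated in periods $1,\dots,T_0$ and treated in periods $T_0+1,\dots,T$; control units are never treated) and potential outcomes $Y_t(0),Y_t(1)\in\mathcal Y$, $t=1,\dots,T$. For $d\in\{0,1\}$ let $\mathbf X_t(d)=(\mathbf 1(Y_t(d)=\bar y^{(1)}),\dots,\mathbf 1(Y_t(d)=\bar y^{(K)}))^\top\in\mathcal X:=\{x\in\{0,1\}^K:\sum_k x^{(k)}=1\}$. Observed outcomes: $\mathbf X_t=\mathbf X_t(0)$ for $t\le T_0$, $\mathbf X_t=D\mathbf X_t(1)+(1-D)\mathbf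 X_t(0)$ for $t\ge T_0+1$. Write $\mathbf X_1^{T_0}=(\mathbf X_1,\dots,\mathbf X_{T_0})$, $\mathbf X_1^{T_0}(0)=(\mathbf X_1(0),\dots,\mathbf X_{T_0}(0))$. For $t\ge T_0+1$: $\boldsymbol\mu^{\mathrm{ATT}}_t=\mathbb{E}[\mathbf X_t(1)-\mathbf X_t(0)\mid D=1]$ and $\boldsymbol\mu^{\mathrm{DiD}}_t=\mathbb{E}[\mathbf X_t-\mathbf X_{T_0}\mid D=1]-\mathbb{E}[\mathbf X_t-\mathbf X_{T_0}\mid D=0]$. Conditional quantities are taken only given events of positive probability. No anticipation: $\mathbf X_t(1)=\mathbf X_t(0)$ for $t\le T_0$. Common support: there is $\epsilon>0$ with $\epsilon\le\Pr(D=1\mid\mathbf X_1^{T_0}=\mathbf x_1^{T_0})<1-\epsilon$ for every $\mathbf x_1^{T_0}$ with $\Pr(\mathbf X_1^{T_0}=\mathbf x_1^{T_0})>0$. Transition independence: for every $t\ge T_0+1$, $\mathbf x_t\in\mathcal X$, $\mathbf x_1^{T_0}\in\mathcal X^{T_0}$: $\Pr(\mathbf X_t(0)=\mathbf x_t\mid \mathbf X_1^{T_0}(0)=\mathbf x_1^{T_0},D=1)=\Pr(\mathbf X_t(0)=\mathbf x_t\mid \mathbf X_1^{T_0}(0)=\mathbf x_1^{T_0},D=0)$. *)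

(* Defs.v *)
From HB Require Import structures.
From mathcomp Require Import all_boot all_order all_algebra.
From mathcomp Require Import all_classical all_reals all_analysis.
Set Implicit Arguments. Unset Strict Implicit. Unset Printing Implicit Defensive.
Import Order.TTheory GRing.Theory Num.Theory.
Local Open Scope classical_set_scope.
Local Open Scope ring_scope.

Section Defs.
Context {R : realType} {d : measure_display} {Omega : measurableType d}
  (P : probability Omega R).

Definition Pr (A : set Omega) : R := fine (P A).

(* conditional probability Pr(A | B) (only meaningful when Pr B > 0) *)
Definition cPr (A B : set Omega) : R := Pr (A `&` B) / Pr B.

Definition condE (V : finType) (K : nat) (f : V -> 'rV[R]_K)
  (W : Omega -> V) (B : set Omega) : 'rV[R]_K :=
  \sum_(v : V) cPr [set w | W w = v] B *: f v.
End Defs.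

(* categories ybar^(1..K) are labelled by 'I_K; X = one-hot indicator vector *)
Definition onehot (R : realType) (K : nat) (y : 'I_K) : 'rV[R]_K :=
  \row_k (k == y)%:R.

(* observed category at time t (t = 1..T, 1-indexed):
   Y_t(0) for t <= T0, and Y_t(D) for t >= T0+1 *)
Definition Yobs {Omega : Type} (K T0 : nat) (D : Omega -> bool)
  (Y : bool -> nat -> Omega -> 'I_K) (t : nat) (w : Omega) : 'I_K :=
  if (t <= T0)%N then Y false t w else Y (D w) t w.

(* pre-treatment history (x_1, ..., x_{T0}) of a category process Z,
   component i : 'I_T0 corresponds to period i+1 *)
Definition prehist {Omega : Type} (K T0 : nat) (Z : nat -> Omega -> 'I_K)
  (w : Omega) : {ffun 'I_T0 -> 'I_K} :=
  [ffun i : 'I_T0 => Z i.+1 w].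

(* the s-th component (1-indexed) of a history x, as an indicator vector *)
Definition xcomp (R : realType) (K T0 : nat) (x : {ffun 'I_T0 -> 'I_K})
  (s : nat) : 'rV[R]_K :=
  if @insub nat (fun n => (n < T0)%N) 'I_T0 s.-1 is Some i then onehot R (x i)
  else 0.

(* Main.v *)
Require Import Defs.
From HB Require Import structures.
From mathcomp Require Import all_boot all_order all_algebra.
From mathcomp Require Import all_classical all_reals all_analysis.
From mathcomp Require Import ring lra.
Import Order.TTheory GRing.Theory Num.Theory.
Local Open Scope classical_set_scope.
Local Open Scope ring_scope.

Section Basics.
Context {R : realType} {d : measure_display} {Omega : measurableType d}
  (P : probability Omega R).

Lemma Pr_ext (A B : set Omega) : (forall w, A w <-> B w) -> Pr P A = Pr P B.
Proof. by move=> H; congr (Pr P _); apply/seteqP; split => w /H. Qed.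

Lemma Pr_fin (A : set Omega) : measurable A -> P A \is a fin_num.
Proof. by move=> mA; apply: fin_num_measure. Qed.

Lemma Pr_ge0 (A : set Omega) : 0 <= Pr P A.
Proof. exact/fine_ge0/measure_ge0. Qed.

Lemma Pr0 : Pr P set0 = 0.
Proof. by rewrite /Pr measure0. Qed.

Lemma Pr_le (A B : set Omega) : measurable A -> measurable B -> A `<=` B ->
  Pr P A <= Pr P B.
Proof.
move=> mA mB AB; apply: fine_le; try exact: Pr_fin.
by apply: le_measure; rewrite ?inE.
Qed.

Lemma PrU (A B : set Omega) : measurable A -> measurable B -> A `&` B = set0 ->
  Pr P (A `|` B) = Pr P A + Pr P B.
Proof.
move=> mA mB AB; rewrite /Pr measureU //; apply: fineD; exact: Pr_fin.
Qed.

Definition mrv {V : Type} (W : Omega -> V) := forall v, measurable [set w | W w = v].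

Lemma Pr_part_seq (V : eqType) (W : Omega -> V) (B : set Omega) (s : seq V) :
  mrv W -> measurable B -> uniq s ->
  measurable ([set w | W w \in s] `&` B) /\
  Pr P ([set w | W w \in s] `&` B) = \sum_(v <- s) Pr P ([set w | W w = v] `&` B).
Proof.
move=> mW mB; elim: s => [|v s IH] /=.
  split; last by rewrite big_nil -Pr0; apply: Pr_ext => w; split=> -[].
  by rewrite (_ : _ `&` _ = set0) //; apply/seteqP; split => w [].
case/andP => vs us; have [ms e] := IH us.
have eq1 : [set w | W w \in v :: s] `&` B =
   ([set w | W w = v] `&` B) `|` ([set w | W w \in s] `&` B).
  apply/seteqP; split => w /=.
    by rewrite in_cons => -[/orP[/eqP->|ws] Bw]; [left|right].
  by rewrite in_cons => -[[->]|[ws Bw]]; rewrite ?eqxx ?ws ?orbT.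
have mv : measurable ([set w | W w = v] `&` B) by apply: measurableI.
rewrite eq1 big_cons; split; first exact: measurableU.
rewrite PrU //; last first.
  apply/seteqP; split => w //= [[wv _] [ws _]].
  by move: vs; rewrite -wv ws.
by rewrite e.
Qed.

Lemma Pr_part (V : finType) (W : Omega -> V) (B : set Omega) :
  mrv W -> measurable B -> Pr P B = \sum_v Pr P ([set w | W w = v] `&` B).
Proof.
move=> mW mB; rewrite -big_enum /=; have [_ <-] := @Pr_part_seq V W B (enum V) mW mB (enum_uniq V).
by apply: Pr_ext => w; split => [Bw|[]//]; split => //=; rewrite mem_enum.
Qed.


Definition Sx {V : finType} {K : nat} (f : V -> 'rV[R]_K) (W : Omega -> V)
  (B : set Omega) : 'rV[R]_K := \sum_v Pr P ([set w | W w = v] `&` B) *: f v.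

Lemma condE_S (V : finType) K (f : V -> 'rV[R]_K) W B :
  condE P f W B = (Pr P B)^-1 *: Sx f W B.
Proof.
rewrite /condE /Sx scaler_sumr; apply: eq_bigr => v _.
by rewrite scalerA /cPr mulrC.
Qed.

Lemma S_ext (V : finType) K (f : V -> 'rV[R]_K) W W' B B' :
  (forall w, B w <-> B' w) -> (forall w, B w -> W w = W' w) ->
  Sx f W B = Sx f W' B'.
Proof.
move=> eB eW; apply: eq_bigr => v _; congr (_ *: _); apply: Pr_ext => w /=.
split=> -[h1 h2].
  by split; [rewrite -(eW w h2)|apply/eB].
have h3 : B w by apply/eB.
by split; [rewrite (eW w h3)|].
Qed.

Lemma mrv_pair (V1 V2 : eqType) (W1 : Omega -> V1) (W2 : Omega -> V2) :
  mrv W1 -> mrv W2 -> mrv (fun w => (W1 w, W2 w)).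
Proof.
move=> m1 m2 [a b]; rewrite (_ : [set w | _] = [set w | W1 w = a] `&` [set w | W2 w = b]).
  exact: measurableI.
by apply/seteqP; split => w /=; [case=> -> ->|case=> -> ->].
Qed.

Lemma S_pair (V1 V2 : finType) K (g : V1 -> 'rV[R]_K) (h : V2 -> 'rV[R]_K)
  W1 W2 B : mrv W1 -> mrv W2 -> measurable B ->
  Sx (fun p : V1 * V2 => g p.1 - h p.2) (fun w => (W1 w, W2 w)) B
  = Sx g W1 B - Sx h W2 B.
Proof.
move=> m1 m2 mB; rewrite /Sx.
have -> : \sum_(p : V1 * V2) Pr P ([set w | (W1 w, W2 w) = p] `&` B) *: (g p.1 - h p.2)
  = \sum_a \sum_b Pr P ([set w | (W1 w, W2 w) = (a, b)] `&` B) *: (g a - h b).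
  by rewrite pair_bigA; apply: eq_bigr => -[a b].
under eq_bigr => a _ do rewrite (eq_bigr _ (fun b _ => scalerBr _ _ _)) sumrB.
rewrite sumrB; congr (_ - _).
  apply: eq_bigr => a _; rewrite -scaler_suml; congr (_ *: _).
  rewrite (Pr_part _ W2 _ m2 (measurableI _ _ (m1 a) mB)); apply: eq_bigr => b _.
  by apply: Pr_ext => w /=; split => [[[-> ->]]|[-> [-> ]]].
rewrite exchange_big /=; apply: eq_bigr => b _; rewrite -scaler_suml; congr (_ *: _).
rewrite (Pr_part _ W1 _ m1 (measurableI _ _ (m2 b) mB)); apply: eq_bigr => a _.
by apply: Pr_ext => w /=; split => [[[-> ->]]|[-> [-> ]]].
Qed.

Lemma S_part (V U : finType) K (f : V -> 'rV[R]_K) W (Z : Omega -> U) B :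
  mrv W -> mrv Z -> measurable B ->
  Sx f W B = \sum_u Sx f W ([set w | Z w = u] `&` B).
Proof.
move=> mW mZ mB; rewrite /Sx exchange_big /=; apply: eq_bigr => v _.
rewrite -scaler_suml; congr (_ *: _).
rewrite (Pr_part _ Z _ mZ (measurableI _ _ (mW v) mB)); apply: eq_bigr => u _.
by apply: Pr_ext => w /=; split => [[-> [-> ]]|[-> [-> ]]].
Qed.

Lemma S_const (V : finType) K (f : V -> 'rV[R]_K) c W B :
  mrv W -> measurable B ->
  Sx (fun v => f v - c) W B = Sx f W B - Pr P B *: c.
Proof.
move=> mW mB; rewrite /Sx (Pr_part _ W _ mW mB) scaler_suml -sumrB.
by apply: eq_bigr => v _; rewrite scalerBr.
Qed.

Lemma S_null (V : finType) K (f : V -> 'rV[R]_K) W B :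
  mrv W -> measurable B -> Pr P B = 0 -> Sx f W B = 0.
Proof.
move=> mW mB B0; rewrite /Sx big1 // => v _.
suff -> : Pr P ([set w | W w = v] `&` B) = 0 by rewrite scale0r.
apply/eqP; rewrite eq_le Pr_ge0 andbT -B0; apply: Pr_le => //.
exact: measurableI.
Qed.

Lemma S_det (V : finType) K (f : V -> 'rV[R]_K) W B v0 :
  measurable B -> (forall w, B w -> W w = v0) -> Sx f W B = Pr P B *: f v0.
Proof.
move=> mB hB; rewrite /Sx (bigD1 v0) //= big1 ?addr0.
  by congr (_ *: _); apply: Pr_ext => w /=; split=> [[]//|Bw]; split=> //; apply: hB.
move=> v /eqP nv; suff -> : Pr P ([set w | W w = v] `&` B) = 0 by rewrite scale0r.
rewrite -Pr0; apply: Pr_ext => w; split => // -[/= Wv Bw].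
by apply: nv; rewrite -Wv hB.
Qed.

End Basics.

Theorem proposition3 (R : realType) (d : measure_display)
  (Omega : measurableType d) (P : probability Omega R)
  (T0 T1 K : nat) (hT0 : (1 <= T0)%N) (hT1 : (1 <= T1)%N) (hK : (2 <= K)%N)
  (D : Omega -> bool) (Y : bool -> nat -> Omega -> 'I_K)
  (* D and the potential outcomes are random variables *)
  (mD : forall b : bool, measurable [set w | D w = b])
  (mY : forall (b : bool) (t : nat) (k : 'I_K), (1 <= t <= T0 + T1)%N ->
          measurable [set w | Y b t w = k])
  (* no anticipation *)
  (noanticip : forall (t : nat) (w : Omega), (1 <= t <= T0)%N ->
          Y true t w = Y false t w)
  (* common support *)
  (commonsupp : exists eps : R, 0 < eps /\
     forall x : {ffun 'I_T0 -> 'I_K},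
       0 < Pr P [set w | prehist T0 (Yobs T0 D Y) w = x] ->
       eps <= cPr P [set w | D w] [set w | prehist T0 (Yobs T0 D Y) w = x]
       /\ cPr P [set w | D w] [set w | prehist T0 (Yobs T0 D Y) w = x] < 1 - eps)
  (* transition independence *)
  (transind : forall (t : nat) (y : 'I_K) (x : {ffun 'I_T0 -> 'I_K}),
     (T0 + 1 <= t <= T0 + T1)%N ->
     0 < Pr P ([set w | prehist T0 (Y false) w = x] `&` [set w | D w]) ->
     0 < Pr P ([set w | prehist T0 (Y false) w = x] `&` [set w | ~~ D w]) ->
     cPr P [set w | Y false t w = y]
         ([set w | prehist T0 (Y false) w = x] `&` [set w | D w])
     = cPr P [set w | Y false t w = y]
         ([set w | prehist T0 (Y false) w = x] `&` [set w | ~~ D w])) :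
  forall t : nat, (T0 + 1 <= t <= T0 + T1)%N ->
    let muDiD :=
      condE P (fun p : 'I_K * 'I_K => onehot R p.1 - onehot R p.2)
        (fun w => (Yobs T0 D Y t w, Yobs T0 D Y T0 w)) [set w | D w]
      - condE P (fun p : 'I_K * 'I_K => onehot R p.1 - onehot R p.2)
        (fun w => (Yobs T0 D Y t w, Yobs T0 D Y T0 w)) [set w | ~~ D w] in
    let muATT :=
      condE P (fun p : 'I_K * 'I_K => onehot R p.1 - onehot R p.2)
        (fun w => (Y true t w, Y false t w)) [set w | D w] in
    muDiD - muATT =
    \sum_(x : {ffun 'I_T0 -> 'I_K})
      (cPr P [set w | prehist T0 (Yobs T0 D Y) w = x] [set w | D w]
       - cPr P [set w | prehist T0 (Yobs T0 D Y) w = x] [set w | ~~ D w])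
      *: condE P (fun y : 'I_K => onehot R y - xcomp R x T0) (Yobs T0 D Y t)
           ([set w | prehist T0 (Yobs T0 D Y) w = x] `&` [set w | ~~ D w]).

Proof.
move=> t ht muDiD muATT; rewrite /muDiD /muATT {muDiD muATT}.
case/andP: ht => ht1 ht2.
have tgt : (T0 < t)%N by rewrite -addn1.
have t1 : (1 <= t <= T0 + T1)%N by rewrite ht2 andbT (leq_trans _ ht1) // leq_addl.
have T01 : (1 <= T0 <= T0 + T1)%N by rewrite hT0 leq_addr.
have eH : prehist T0 (Yobs T0 D Y) = prehist T0 (Y false).
  by apply: funext => w; apply/ffunP => i; rewrite !ffunE /Yobs ltn_ord.
have eT0 : Yobs T0 D Y T0 = Y false T0 by apply: funext => w; rewrite /Yobs leqnn.
have et : forall w, Yobs T0 D Y t w = Y (D w) t w.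
  by move=> w; rewrite /Yobs leqNgt tgt.
rewrite eH eT0; rewrite eH in commonsupp.
case: commonsupp => eps [eps0 cs].
have mYt0 : mrv (Y false t) by move=> k; exact: mY.
have mYt1 : mrv (Y true t) by move=> k; exact: mY.
have mYT0 : mrv (Y false T0) by move=> k; exact: mY.
have mBD : measurable [set w | D w] := mD true.
have mBN : measurable [set w | ~~ D w].
  rewrite (_ : [set w | ~~ D w] = [set w | D w = false]); first exact: mD.
  by apply/seteqP; split => w /=; case: (D w).
have mYt : mrv (Yobs T0 D Y t).
  move=> k; rewrite (_ : [set w | _] = ([set w | D w] `&` [set w | Y true t w = k])
     `|` ([set w | ~~ D w] `&` [set w | Y false t w = k])).
    by apply: measurableU; apply: measurableI.
  apply/seteqP; split => w /=; rewrite et; case: (D w) => /=.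
  - by left.
  - by right.
  - by case=> -[].
  - by case=> -[].
have mH : mrv (prehist T0 (Y false)).
  move=> x.
  have : forall s : seq 'I_T0,
      measurable [set w | forall i, i \in s -> Y false i.+1 w = x i].
    elim=> [|i s IH].
      rewrite (_ : [set w | _] = setT) //; apply/seteqP; split => w //= _ i.
    rewrite (_ : [set w | _] = [set w | Y false i.+1 w = x i] `&`
                [set w | forall j, j \in s -> Y false j.+1 w = x j]).
      apply: measurableI => //; apply: mY.
      by rewrite /= (leq_trans (ltn_ord i)) // leq_addr.
    apply/seteqP; split => w /=.
      by move=> h; split; [apply: h; rewrite in_cons eqxx|move=> j js; apply: h; rewrite in_cons js orbT].
    by case=> h1 h2 j; rewrite in_cons => /orP[/eqP->|]; [|apply: h2].
  move/(_ (enum 'I_T0)).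
  rewrite (_ : [set w | _] = [set w | prehist T0 (Y false) w = x]) //.
  apply/seteqP; split => w /=.
    by move=> h; apply/ffunP => i; rewrite ffunE h // mem_enum.
  by move=> <- i _; rewrite ffunE.
rewrite !condE_S !S_pair //.
have e1 : Sx P (@onehot R K) (Yobs T0 D Y t) [set w | D w] = Sx P (@onehot R K) (Y true t) [set w | D w].
  by apply: S_ext => // w Dw; rewrite et Dw.
have e2 : Sx P (@onehot R K) (Yobs T0 D Y t) [set w | ~~ D w] = Sx P (@onehot R K) (Y false t) [set w | ~~ D w].
  by apply: S_ext => // w /negbTE Dw; rewrite et Dw.
rewrite e1 e2.
set p1 := Pr P [set w | D w]; set p0 := Pr P [set w | ~~ D w].
set A1 := Sx P (@onehot R K) (Y true t) [set w | D w].
rewrite (_ : p1^-1 *: (A1 - _) - p0^-1 *: _ - p1^-1 *: (A1 - _) =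
   p1^-1 *: (Sx P (@onehot R K) (Y false t) [set w | D w] - Sx P (@onehot R K) (Y false T0) [set w | D w])
   - p0^-1 *: (Sx P (@onehot R K) (Y false t) [set w | ~~ D w] - Sx P (@onehot R K) (Y false T0) [set w | ~~ D w])); last first.
  by apply/rowP => k; rewrite !mxE; ring.
rewrite !(S_part _ _ _ _ _ _ (prehist T0 (Y false))) //.
rewrite -!sumrB !scaler_sumr -sumrB; apply: eq_bigr => x _.
set Ax := [set w | prehist T0 (Y false) w = x].
have mAx : measurable Ax := mH x.
have mAD : measurable (Ax `&` [set w | D w]) by exact: measurableI.
have mAN : measurable (Ax `&` [set w | ~~ D w]) by exact: measurableI.
rewrite condE_S S_const //.
have e3 : Sx P (@onehot R K) (Yobs T0 D Y t) (Ax `&` [set w | ~~ D w])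
        = Sx P (@onehot R K) (Y false t) (Ax `&` [set w | ~~ D w]).
  by apply: S_ext => // w [_ /negbTE Dw]; rewrite et Dw.
have T0p : (T0.-1 < T0)%N by rewrite prednK.
set i0 := Ordinal T0p.
have d1 : Sx P (@onehot R K) (Y false T0) (Ax `&` [set w | D w])
    = Pr P (Ax `&` [set w | D w]) *: onehot R (x i0).
  by apply: S_det => // w [/= <-]; rewrite ffunE /= prednK.
have d2 : Sx P (@onehot R K) (Y false T0) (Ax `&` [set w | ~~ D w])
    = Pr P (Ax `&` [set w | ~~ D w]) *: onehot R (x i0).
  by apply: S_det => // w [/= <-]; rewrite ffunE /= prednK.
have ec : xcomp R x T0 = onehot R (x i0).
  rewrite /xcomp; case: insubP => [i _ ei|]; last by rewrite T0p.
  by congr (onehot R (x _)); apply: val_inj.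
rewrite d1 d2 e3 ec /cPr.
set q1 := Pr P (Ax `&` [set w | D w]); set q0 := Pr P (Ax `&` [set w | ~~ D w]).
set U := Sx P (@onehot R K) (Y false t) (Ax `&` [set w | ~~ D w]).
set V := Sx P (@onehot R K) (Y false t) (Ax `&` [set w | D w]).
have hq : q1 != 0 -> 0 < q0.
  move=> q1n0; have q1p : 0 < q1 by rewrite lt_def q1n0 Pr_ge0.
  have hA : Pr P Ax = q1 + q0.
    rewrite (Pr_part P _ D _ mD mAx) big_bool /=; congr (_ + _); apply: Pr_ext => w /=;
    split=> -[h1 h2]; split=> //; by [rewrite h1|apply/negbTE].
  have AxP : 0 < Pr P Ax by rewrite hA (lt_le_trans q1p) // lerDl Pr_ge0.
  have [_ h] := cs x AxP.
  have : cPr P [set w | D w] Ax < 1.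
    by apply: (lt_le_trans h); rewrite lerBlDr lerDl ltW.
  rewrite /cPr ltr_pdivrMr // mul1r hA.
  rewrite (_ : Pr P ([set w | D w] `&` Ax) = q1) ?ltrDl //.
  by apply: Pr_ext => w; split=> -[].
have hV : V = (q1 / q0) *: U.
  have [q10|q1n0] := eqVneq q1 0.
    rewrite q10 mul0r scale0r; apply: S_null => //.
  have q0p := hq q1n0; have q1p : 0 < q1 by rewrite lt_def q1n0 Pr_ge0.
  rewrite /V /U /Sx scaler_sumr; apply: eq_bigr => v _; rewrite scalerA; congr (_ *: _).
  have := transind t v x (introT andP (conj ht1 ht2)) q1p q0p; rewrite /cPr -/Ax => e.
  have -> : Pr P ([set w | Y false t w = v] `&` (Ax `&` [set w | D w])) =
     Pr P ([set w | Y false t w = v] `&` (Ax `&` [set w | D w])) / q1 * q1.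
    by rewrite mulfVK.
  by rewrite e -/q0 mulrAC [RHS]mulrAC [_ * q1]mulrC.
have [q00|q0n0] := eqVneq q0 0.
  have q10 : q1 = 0.
    by case: (eqVneq q1 0) => // /hq; rewrite q00 ltxx.
  have U0 : U = 0 by apply: S_null => //.
  rewrite hV U0 q00 q10; apply/rowP => k; rewrite !mxE invr0; ring.
rewrite hV; move: (p1^-1) (p0^-1) => a b.
apply/rowP => k; rewrite !mxE; field; done.
Qed.
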